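(* Let $K$ be a compact metric space and $\{\mu_j\}$ a sequence of finite positive regular Borel measures on $K$ converging weak-* in $C(K)^*$ to a finite positive Borel measure $\mu$. Suppose $\operatorname{supp}\mu_j\cap\operatorname{supp}\mu=\emptyset$ for all $j$. Then the measures $\mu_j$ converge weak-* to $\mu$ regularly.
   Context: Weak-* convergence means $\int h\,d\mu_j\to\int h\,d\mu$ for all $h\in C(K)$. The convergence is called regular if, in addition, for every $\mu$-measurable set $A\subset K_0=\operatorname{supp}\mu$ and every $\varepsilon>0$ there are an open set $O\subset K$ with $A\subset O$ and an index $j_0$ such that $\mu_j(O)<\mu(A)+\varepsilon$ for all $j\ge j_0$. *)

(* Defs.v *)
From HB Require Import structures.
From mathcomp Require Import all_boot all_order all_algebra.
From mathcomp Require Import all_classical all_reals all_analysis.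
Set Implicit Arguments. Unset Strict Implicit. Unset Printing Implicit Defensive.
Import Order.TTheory GRing.Theory Num.Theory numFieldNormedType.Exports.
Local Open Scope classical_set_scope.
Local Open Scope ring_scope.

(* Metric spaces with a distinguished point (i.e. nonempty), needed so that
   the Borel sigma-algebra yields a measurableType. *)
#[short(type="pmetricType")]
HB.structure Definition PointedMetric (K : numDomainType) :=
  { M of Metric K M & isPointed M }.

Definition borelType (T : ptopologicalType) := g_sigma_algebraType (@open T).

Section defs.
Context {R : realType} {T : ptopologicalType}.
Local Notation B := (borelType T).

Definition msupp (mu : set B -> \bar R) : set T :=
  [set x | forall O : set T, open O -> O x -> (0 < mu O)%E].

Definition regular_measure (mu : set B -> \bar R) : Prop :=
  forall A : set B, measurable A ->
    mu A = ereal_inf [set mu O | O in [set O : set T | open O /\ A `<=` O]] /\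
    mu A = ereal_sup [set mu C | C in [set C : set T | compact C /\ C `<=` A]].

Definition weak_star_cvg (mu_ : nat -> {measure set B -> \bar R})
  (mu : {measure set B -> \bar R})
  : Prop :=
  forall h : T -> R, continuous h ->
    (fun j => (\int[mu_ j]_x (h x)%:E)%E) @ \oo --> (\int[mu]_x (h x)%:E)%E.

(* [mu_meas_val mu A a]: A is mu-measurable (i.e. measurable for the
   completion of mu) and its completed measure is a. *)
Definition mu_meas_val (mu : set B -> \bar R) (A : set T) (a : \bar R) : Prop :=
  exists (Bs N : set B), [/\ measurable Bs, measurable N, mu N = 0%E,
    (A `\` Bs) `|` (Bs `\` A) `<=` N & mu Bs = a].

Definition regular_weak_star_cvg (mu_ : nat -> {measure set B -> \bar R})
  (mu : {measure set B -> \bar R}) : Prop :=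
  weak_star_cvg mu_ mu /\
  forall (A : set T) (a : \bar R), A `<=` msupp mu -> mu_meas_val mu A a ->
  forall eps : R, 0 < eps ->
  exists O : set T, [/\ open O, A `<=` O &
    exists j0 : nat, forall j, (j0 <= j)%N -> (mu_ j O < a + eps%:E)%E].
End defs.

(* Main.v *)
Require Import Defs.
From HB Require Import structures.
From mathcomp Require Import all_boot all_order all_algebra.
From mathcomp Require Import all_classical all_reals all_analysis.
From mathcomp Require Import lra zify.
Import Order.TTheory GRing.Theory Num.Theory numFieldNormedType.Exports.
Local Open Scope classical_set_scope.
Local Open Scope ring_scope.
Fixpoint Mseq (Jm : nat -> nat) (j : nat) : nat :=
  match j with
  | 0 => 0
  | j'.+1 => if (Jm (Mseq Jm j').+1 <= j'.+1)%N then (Mseq Jm j').+1 else Mseq Jm j'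
  end.

Lemma Mseq_step Jm j : (Mseq Jm j <= Mseq Jm j.+1)%N.
Proof. by rewrite /=; case: ifP. Qed.

Lemma Mseq_mono Jm i j : (i <= j)%N -> (Mseq Jm i <= Mseq Jm j)%N.
Proof.
move=> /subnK <-; elim: (j - i)%N => [//|n IH].
by rewrite addSn; apply: leq_trans IH (Mseq_step _ _).
Qed.

Lemma Mseq_J Jm j : (Jm 0 <= j)%N -> (Jm (Mseq Jm j) <= j)%N.
Proof.
have : Mseq Jm j = 0%N \/ (Jm (Mseq Jm j) <= j)%N.
  elim: j => [|j [IH|IH]] /=; first by left.
  - by case: ifP => h; [right | left].
  - by case: ifP => h; right => //; apply: leq_trans IH _.
by case=> [->|].
Qed.

Lemma Mseq_unb Jm k : exists N, forall j, (N <= j)%N -> (k <= Mseq Jm j)%N.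
Proof.
elim: k => [|k [N hN]]; first by exists 0%N.
pose N' := maxn N (Jm k.+1).
have h1 : (k <= Mseq Jm N')%N by apply: hN; exact: leq_maxl.
have h2 : (k.+1 <= Mseq Jm N'.+1)%N.
  have [lt|] := ltnP k (Mseq Jm N').
    by apply: leq_trans lt (Mseq_step _ _).
  move=> ge; have eq : Mseq Jm N' = k by apply/eqP; rewrite eqn_leq ge h1.
  rewrite /= eq; have -> : (Jm k.+1 <= N'.+1)%N.
    by rewrite /N'; lia.
  by [].
exists N'.+1 => j hj; exact: leq_trans h2 (Mseq_mono Jm _ _ hj).
Qed.

Section S.
Context {R : realType} {K : pmetricType R}.
Local Notation B := (borelType K).

Lemma open_mB {U : set K} : open U -> measurable (U : set B).
Proof. by move=> oU; apply: sub_gen_smallest. Qed.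

Lemma closed_mB {C : set K} : closed C -> measurable (C : set B).
Proof.
move=> cC; rewrite -[C]setCK; apply: measurableC; apply: open_mB.
exact: closed_openC.
Qed.

Lemma cont_mB (f : K -> R) : continuous f -> measurable_fun [set: B] (f : B -> R).
Proof.
move=> /continuousP cf; apply: (measurability _ (measurable_realfun.RGenOpens.measurableE R)).
move=> _ [_ [a [b ->] <-]]. rewrite setTI. apply: open_mB. 
exact/cf/interval_open.
Qed.

Lemma dist_fun (F : set K) : closed F ->
  exists g : K -> R, [/\ continuous g, forall x, 0 <= g x & forall x, g x = 0 <-> F x].
Proof.
move=> cF.
have [->|/set0P [y0 Fy0]] := eqVneq F set0.
  exists (fun=> 1); split => //; first by move=> x; exact: cvg_cst.
  by move=> x; split => // /eqP; rewrite oner_eq0.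
pose D x := [set mdist x y | y in F].
have hD x : has_lbound (D x) by exists 0 => _ [y _ <-]; exact: mdist_ge0.
have nD x : nonempty (D x) by exists (mdist x y0), y0.
pose g x := inf (D x).
have g0 x : 0 <= g x by apply: lb_le_inf => // _ [y _ <-]; exact: mdist_ge0.
have lip x x' : g x <= mdist x x' + g x'.
  rewrite addrC -lerBlDr; apply: lb_le_inf => // _ [y Fy <-].
  have h1 : g x <= mdist x y by apply: ge_inf => //; exists y.
  have := metric_triangle x x' y; lra.
exists g; split => //.
- move=> x; apply/cvgrPdist_lt => e e0.
  have := nbhsx_ballx x e e0; apply: filterS => y; rewrite ballEmdist /= => xy.
  have := lip x y; have := lip y x; rewrite metric_sym => h1 h2.
  rewrite ltr_norml; apply/andP; split; lra.
- move=> x; split; last first.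
    move=> Fx; apply/eqP; rewrite eq_le g0 andbT.
    by rewrite -(mdistxx x); apply: ge_inf => //; exists x.
  move=> gx0; apply: cF => B /nbhs_ballP [e e0 sB].
  have [_ [y Fy <-] ye] : exists2 r, D x r & r < e.
    by apply: inf_lt => //; rewrite /g in gx0; rewrite gx0.
  by exists y; split => //; apply: sB; rewrite ballEmdist.
Qed.

Lemma msupp_closed (mu : set B -> \bar R) : closed (msupp mu).
Proof.
rewrite -[msupp mu]setCK; apply: open_closedC; rewrite openE => x nx.
have [W [oO Ox nO]] : exists W : set K, [/\ open W, W x & ~ (0 < mu W)%E].
  apply: contrapT => h; apply: nx => O oO Ox; apply: contrapT => n.
  by apply: h; exists O.
rewrite /interior; apply: (filterS _ (open_nbhs_nbhs (conj oO Ox))).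
by move=> y Oy ms; apply: nO; apply: ms.
Qed.

Lemma msupp_null (mu : {measure set B -> \bar R}) : regular_measure mu ->
  mu (~` msupp mu) = 0%E.
Proof.
move=> reg.
have mS : measurable (~` msupp mu : set B).
  by apply: open_mB; apply: closed_openC; exact: msupp_closed.
apply/eqP; rewrite eq_le measure_ge0 andbT (reg _ mS).2.
apply: ge_ereal_sup => _ [C [cC CS] <-].
have [f hf] : {f : K -> set K & forall x, open (f x) /\
    (C x -> f x x /\ mu (f x) = 0%E)}.
  apply: (@choice K (set K) (fun x O => open O /\ (C x -> O x /\ mu O = 0%E))) => x; have [Cx|nCx] := pselect (C x); last first.
    by exists set0; split => //; exact: open0.
  have nx := CS x Cx.
  have [W [oO Ox nO]] : exists W : set K, [/\ open W, W x & ~ (0 < mu W)%E].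
    apply: contrapT => h; apply: nx => O oO Ox; apply: contrapT => n.
    by apply: h; exists O.
  exists W; split => // _; split => //; apply/eqP; rewrite eq_le measure_ge0.
  by rewrite andbT leNgt; apply/negP.
have := cC; rewrite compact_cover => /(_ K C f (fun i _ => (hf i).1)).
move=> /(_ (fun x Cx => ex_intro2 _ _ x Cx ((hf x).2 Cx).1)) [D' sD' cov].
have mC : measurable (C : set B) by apply: closed_mB; exact: (compact_closed (@metric_hausdorff _ K) cC).
have null : forall s : seq K, (forall i, i \in s -> C i) ->
    mu (\big[setU/set0]_(i <- s) f i) = 0%E.
  elim => [|i s IH] h; first by rewrite big_nil measure0.
  rewrite big_cons null_set_setU //.
  - exact: open_mB (hf i).1.
  - by apply: bigsetU_measurable => j _; exact: open_mB (hf j).1.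
  - by apply: ((hf i).2 (h i (mem_head _ _))).2.
  - by apply: IH => j js; apply: h; rewrite in_cons js orbT.
rewrite -(null (finmap.enum_fset D')); last by move=> i iD; have := sD' i iD; rewrite inE.
apply: le_measure => //; first by rewrite inE.
  by rewrite inE; apply: bigsetU_measurable => j _; exact: open_mB (hf j).1.
by rewrite -bigcup_fset.
Qed.

Lemma natinv_lt {x : R} : 0 < x -> exists n : nat, n.+1%:R^-1 < x.
Proof.
move=> x0; have [N _ hN] := near_infty_natSinv_lt (PosNum x0).
by exists N; exact: hN N (leqnn N).
Qed.

Lemma cvge_near {T : Type} {F : set_system T} {FF : Filter F}
  {f : T -> \bar R} {a e : R} : f @ F --> a%:E -> 0 < e ->
  \forall n \near F, ((a - e)%:E < f n)%E /\ (f n < (a + e)%:E)%E.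
Proof.
move=> /fine_cvgP [ffin cf] e0.
have h1 := cvgr_lt a cf (a + e) ltac:(lra).
have h2 := cvgr_gt a cf (a - e) ltac:(lra).
near=> n.
have fn : f n = (fine (f n))%:E by rewrite fineK //; near: n.
rewrite fn !lte_fin; split; [near: n; exact: h2 | near: n; exact: h1].
Unshelve. all: by end_near.
Qed.

Lemma ereal_sub_lt (x y : \bar R) (e : R) : x \is a fin_num -> y \is a fin_num ->
  ((fine x - e)%:E < y)%E -> (x - y < e%:E)%E.
Proof. by case: x => // a; case: y => // b _ _ /=; rewrite -EFinB !lte_fin; lra. Qed.

Section outer.
Variable mu : {finite_measure set B -> \bar R}.

Let mfin {A : set B} : measurable A -> mu A = (fine (mu A))%:E.
Proof. by move=> mA; rewrite fineK //; exact: fin_num_measure. Qed.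

Definition good (E : set K) := forall e : R, 0 < e -> exists C U : set K,
  [/\ closed C, open U, C `<=` E, E `<=` U & (mu (U `\` C) < e%:E)%E].

Lemma good_open W : open W -> good W.
Proof.
move=> oW e e0.
have [g [cg g0 gz]] := @dist_fun (~` W) (open_closedC oW).
pose Cn (n : nat) := [set x | n.+1%:R^-1 <= g x].
have cC n : closed (Cn n).
  exact: ((continuous_closedP g).1 cg _ (@closed_ge _ (n.+1%:R^-1))).
have CW n : Cn n `<=` W.
  move=> x h; apply: contrapT => nW; move: h.
  by rewrite /Cn /= ((gz x).2 nW) invr_le0 leNgt ltr0n.
have UC : \bigcup_n Cn n = W.
  apply/seteqP; split => [x [n _ /CW]//|x Wx].
  have gx : 0 < g x.
    rewrite lt_neqAle g0 andbT; apply/eqP => /esym /(gz x) //.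
  by have [n hn] := natinv_lt gx; exists n => //; rewrite /Cn /= ltW.
have mono : {homo Cn : n m / (n <= m)%N >-> (n <= m)%O}.
  move=> n m nm; apply/subsetPset => x; rewrite /Cn /=; apply: le_trans.
  by rewrite lef_pV2 ?posrE ?ltr0n // ler_nat ltnS.
have mW := open_mB oW.
have mU : measurable (\bigcup_n Cn n : set B) by rewrite UC.
have cv := nondecreasing_cvg_mu (mu:=mu) (fun n => closed_mB (cC n)) mU mono.
rewrite UC in cv.
have {}cv : (fun n => mu (Cn n)) @ \oo --> (fine (mu W))%:E.
  by rewrite -(mfin mW); exact: cv.
have [N _ hN] := cvge_near cv e0.
have [h1 _] := hN N (leqnn N).
exists (Cn N), W; split => //.
have mCN := closed_mB (cC N).
rewrite measureD //; last by rewrite ltey_eq fin_num_measure.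
rewrite setIidr //.
by apply: ereal_sub_lt h1; exact: fin_num_measure.
Qed.

Lemma ereal_half_lt (x y : \bar R) (e : R) : (0 <= x)%E -> (0 <= y)%E ->
  (x <= (e / 2)%:E)%E -> (y < (e / 2)%:E)%E -> (x + y < e%:E)%E.
Proof.
move=> x0 y0 hx hy.
have fx : x \is a fin_num by rewrite ge0_fin_numE // (le_lt_trans hx) ?ltry.
have fy : y \is a fin_num by rewrite ge0_fin_numE // (lt_trans hy) ?ltry.
rewrite -(fineK fx) -(fineK fy) in hx hy *.
by rewrite -EFinD lte_fin; move: hx hy; rewrite lee_fin lte_fin; lra.
Qed.

Lemma good_compl E : good E -> good ([set: K] `\` E).
Proof.
move=> gE e e0; have [C [U [cC oU CE EU h]]] := gE e e0.
exists (~` U), (~` C); split.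
- exact: open_closedC.
- exact: closed_openC.
- by rewrite setTD; apply: subsetC.
- by rewrite setTD; apply: subsetC.
- by rewrite setDE setCK setIC -setDE.
Qed.

Lemma good_bigcup (F : (set K)^nat) : (forall n, good (F n)) ->
  good (\bigcup_n F n).
Proof.
move=> gF e e0.
have e2 : 0 < e / 2 by rewrite divr_gt0.
have epsn n : 0 < e / 2 / (2 ^ n.+1)%:R by rewrite divr_gt0 // ltr0n expn_gt0.
have [CU hCU] := @choice nat (set K * set K) (fun n p => [/\ closed p.1, open p.2,
    p.1 `<=` F n, F n `<=` p.2 &
    (mu (p.2 `\` p.1) < (e / 2 / (2 ^ n.+1)%:R)%:E)%E]) (fun n =>
    let: ex_intro C (ex_intro U h) := gF n _ (epsn n) in ex_intro _ (C, U) h).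
pose C n := (CU n).1; pose U n := (CU n).2.
have cCn n : closed (C n) by case: (hCU n).
have oUn n : open (U n) by case: (hCU n).
have CF n : C n `<=` F n by case: (hCU n).
have FU n : F n `<=` U n by case: (hCU n).
have hUC n : (mu (U n `\` C n) < (e / 2 / (2 ^ n.+1)%:R)%:E)%E by case: (hCU n).
pose CC := \bigcup_n C n.
pose P N := \bigcup_(i in `I_N) C i.
have cP N : closed (P N).
  by rewrite /P bigcup_mkord; apply: closed_bigsetU => i _; exact: cCn.
have mP N : measurable (P N : set B) := closed_mB (cP N).
have mCC : measurable (CC : set B).
  by apply: bigcup_measurable => n _; exact: closed_mB (cCn n).
have UP : \bigcup_N P N = CC.
  apply/seteqP; split => [x [N _ [i _ Ci]]|x [i _ Ci]]; first by exists i.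
  by exists i.+1 => //; exists i => //=.
have monoP : {homo P : n m / (n <= m)%N >-> (n <= m)%O}.
  move=> n m nm; apply/subsetPset => x [i /= ilt Ci]; exists i => //=.
  exact: leq_trans ilt nm.
have mUP : measurable (\bigcup_N P N : set B) by rewrite UP.
have cv := nondecreasing_cvg_mu (mu:=mu) mP mUP monoP.
rewrite UP in cv.
have {}cv : (fun n => mu (P n)) @ \oo --> (fine (mu CC))%:E.
  by rewrite -(mfin mCC); exact: cv.
have [N _ hN] := cvge_near cv e2.
have [h1 _] := hN N (leqnn N).
exists (P N), (\bigcup_n U n); split => //.
- by apply: bigcup_open => n _; exact: oUn.
- by move=> x [i _ Ci]; exists i => //; exact: CF.
- by move=> x [i _ Fi]; exists i => //; exact: FU.
have sub : (\bigcup_n U n) `\` P N `<=`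
    (\bigcup_n (U n `\` C n)) `|` (CC `\` P N).
  move=> x [[n _ Ux] nP]; have [Cx|nCx] := pselect (C n x).
    by right; split => //; exists n.
  by left; exists n.
have mUD n : measurable (U n `\` C n : set B).
  exact: measurableD (open_mB (oUn n)) (closed_mB (cCn n)).
have mBU : measurable (\bigcup_n (U n `\` C n) : set B).
  by apply: bigcup_measurable => n _; exact: mUD.
have mCP : measurable (CC `\` P N : set B) by exact: measurableD.
have mL : measurable ((\bigcup_n U n) `\` P N : set B).
  apply: measurableD => //; apply: open_mB.
  by apply: bigcup_open => n _; exact: oUn.
have := @le_measure _ _ _ mu _ _ (mem_set mL) (mem_set (measurableU _ _ mBU mCP)) sub.
move/le_lt_trans; apply.
apply: (le_lt_trans (measureU2 mu mBU mCP)).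
apply: ereal_half_lt; [exact: measure_ge0 | exact: measure_ge0 | |].
- apply: (le_trans (measure_sigma_subadditive mu mUD mBU (@subset_refl _ _))).
  apply: le_trans (epsilon_trick0 xpredT (ltW e2)).
  apply: lee_nneseries; first by move=> n _ _; exact: measure_ge0.
  by move=> n _; exact: ltW (hUC n).
- rewrite measureD //; last by rewrite ltey_eq fin_num_measure.
  have -> : CC `&` P N = P N.
    by apply/setIidr => x [i _ Ci]; exists i.
  by apply: ereal_sub_lt h1; exact: fin_num_measure.
Qed.

Lemma all_good {E : set B} : measurable E -> good E.
Proof.
move=> mE; have : <<s (@open K) >> `<=` good; last by apply.
apply: smallest_sub; last by move=> W oW; exact: good_open.
split.
- move=> e e0; exists set0, set0; split => //; first exact: closed0.
    exact: open0.
  by rewrite setD0 measure0 lte_fin.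
- exact: good_compl.
- exact: good_bigcup.
Qed.

Lemma outer_reg (E : set B) : measurable E -> forall e : R, 0 < e ->
  exists U : set K, [/\ open U, E `<=` U & (mu U <= mu E + e%:E)%E].
Proof.
move=> mE e e0; have [C [U [cC oU CE EU h]]] := all_good mE e e0.
exists U; split => //.
have mU := open_mB oU; have mC := closed_mB cC.
rewrite (measureDI mu mU mC) addeC; apply: leeD; last exact: ltW.
apply: le_measure; rewrite ?inE //; first exact: measurableI.
by move=> x [_ /CE].
Qed.
End outer.

Section integ.
Variable mu : {measure set B -> \bar R}.

Lemma int_ge_meas (E : set B) (f : K -> R) : measurable E -> continuous f ->
  (forall x, 0 <= f x) -> (forall x, E x -> 1 <= f x) ->
  (mu E <= \int[mu]_x (f x)%:E)%E.
Proof.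
move=> mE cf f0 f1.
rewrite -[X in (mu X <= _)%E]setIT -integral_indic //.
apply: ge0_le_integral => //.
- by apply/measurable_realfun.measurable_EFinP; exact: measurable_realfun.measurable_indic.
- by apply/measurable_realfun.measurable_EFinP; exact: cont_mB.
- move=> x _; rewrite lee_fin indicE; have [Ex|nEx] := boolP (x \in E).
    by rewrite f1 //; rewrite inE in Ex.
  by rewrite f0.
Qed.

Lemma int_le_meas (E : set B) (f : K -> R) : measurable E -> continuous f ->
  (forall x, 0 <= f x) -> (forall x, f x <= 1) -> (forall x, ~ E x -> f x = 0) ->
  (\int[mu]_x (f x)%:E <= mu E)%E.
Proof.
move=> mE cf f0 f1 fE.
rewrite -[X in (_ <= mu X)%E]setIT -integral_indic //.
apply: ge0_le_integral => //.
- by move=> x _; rewrite lee_fin.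
- by apply/measurable_realfun.measurable_EFinP; exact: cont_mB.
- by apply/measurable_realfun.measurable_EFinP; exact: measurable_realfun.measurable_indic.
- move=> x _; rewrite lee_fin indicE; have [Ex|nEx] := boolP (x \in E).
    by rewrite f1.
  by rewrite fE // => Ex; move: nEx; rewrite (mem_set Ex).
Qed.
End integ.
End S.

Theorem lemma2p4 (R : realType) (K : pmetricType R)
  (mu_ : nat -> {finite_measure set (borelType K) -> \bar R})
  (mu : {finite_measure set (borelType K) -> \bar R}) :
  compact [set: K] ->
  (forall j, regular_measure (mu_ j)) ->
  weak_star_cvg (fun j => mu_ j : {measure set (borelType K) -> \bar R}) mu ->
  (forall j, msupp (mu_ j) `&` msupp mu = set0) ->
  regular_weak_star_cvg (fun j => mu_ j : {measure set (borelType K) -> \bar R}) mu.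
Proof.
move=> cK reg wk disj; split => // A a Asupp [Bs [N [mBs mN N0 sAB aE]]] eps eps0.
have e3 : 0 < eps / 3 by rewrite divr_gt0.
have mBN : measurable (Bs `|` N) := measurableU _ _ mBs mN.
have [U [oU sBU hU]] := outer_reg mu _ mBN _ e3.
have eqBN : mu (Bs `|` N) = a by rewrite -aE; apply: measureU0.
rewrite eqBN in hU.
have AU : A `<=` U.
  move=> x Ax; apply: sBU; have [Bx|nBx] := pselect (Bs x); first by left.
  by right; apply: sAB; left; split.
have mU := open_mB oU.
have fa : a \is a fin_num by rewrite -aE; exact: fin_num_measure.
have fU : mu U \is a fin_num by exact: fin_num_measure.
have [g [cg g0 gz]] := @dist_fun _ _ (~` U) (open_closedC oU).
pose phi (m : nat) x := Order.min 1 (m.+1%:R * g x).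
have cphi m : continuous (phi m).
  apply: min_fun_continuous; first by move=> x; exact: cvg_cst.
  by move=> x; exact: cvgMl_tmp (cg x).
have phi0 m x : 0 <= phi m x by rewrite /phi le_min ler01 mulr_ge0.
have phi1 m x : phi m x <= 1 by rewrite /phi ge_min lexx.
have phiU m x : ~ U x -> phi m x = 0.
  by move=> nU; rewrite /phi ((gz x).2 nU) mulr0; apply/min_idPr; exact: ler01.
have phiG m x : m.+1%:R^-1 <= g x -> 1 <= phi m x.
  move=> h; rewrite /phi le_min lexx /=.
  have mp : 0 < m.+1%:R :> R by rewrite ltr0n.
  have hc : m.+1%:R * m.+1%:R^-1 = 1 :> R by rewrite mulfV // gt_eqF.
  move: h mp hc; set c := (m.+1%:R : R); set ci := c^-1; nra.
have intU m : (\int[mu]_x (phi m x)%:E <= mu U)%E.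
  exact: int_le_meas mU (cphi m) (phi0 m) (phi1 m) (phiU m).
have finI m : (\int[mu]_x (phi m x)%:E \is a fin_num)%E.
  have i0 : (0 <= \int[mu]_x (phi m x)%:E)%E.
    by apply: integral_ge0 => x _; rewrite lee_fin; exact: phi0.
  rewrite ge0_fin_numE //.
  by apply: le_lt_trans (intU m) _; rewrite ltey_eq fU.
have [J hJ] : {J : nat -> nat & forall m j, (J m <= j)%N ->
    (\int[mu_ j]_x (phi m x)%:E < (fine (mu U) + eps / 3)%:E)%E}.
  apply: (@choice nat nat (fun m Jm => forall j, (Jm <= j)%N ->
    (\int[mu_ j]_x (phi m x)%:E < (fine (mu U) + eps / 3)%:E)%E)) => m.
  have wk' : (fun j => (\int[mu_ j]_x (phi m x)%:E)%E) @ \oo -->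
      (fine (\int[mu]_x (phi m x)%:E)%E)%:E.
    by rewrite fineK //; exact: wk (cphi m).
  have [N1 _ hN] := cvge_near wk' e3.
  exists N1 => j hj; have [_ h] := hN j hj; apply: (lt_le_trans h).
  rewrite lee_fin lerD2r; apply: fine_le => //; exact: intU.
pose M := Mseq J.
pose del j := (M j).+1%:R^-1 : R.
pose Z j := msupp (mu_ j) `&` [set x | g x <= del j].
have cZ j : closed (Z j).
  apply: closedI; first exact: msupp_closed.
  exact: ((continuous_closedP g).1 cg _ (@closed_le _ (del j))).
have oO : open [set x | U x /\ forall j, ~ Z j x].
  rewrite openE => x [Ux nZ].
  have gx : 0 < g x.
    rewrite lt_neqAle g0 andbT; apply/eqP => /esym /(gz x) //.
  have [k hk] := @natinv_lt _ (g x / 2) ltac:(lra).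
  have [Nk hNk] := Mseq_unb J k.
  have dk j : (Nk <= j)%N -> del j < g x / 2.
    move=> hj; apply: le_lt_trans hk; rewrite /del lef_pV2 ?posrE ?ltr0n //.
    by rewrite ler_nat ltnS; exact: hNk.
  have near1 : \forall y \near x, g x / 2 < g y.
    exact: (cvgr_gt (g x) (cg x) (g x / 2) ltac:(lra)).
  have near2 : forall n, \forall y \near x, forall j, (j < n)%N -> ~ Z j y.
    elim => [|n IH]; first by near=> y => j.
    have hn : \forall y \near x, ~ Z n y.
      apply: open_nbhs_nbhs; split; [exact: closed_openC | exact: nZ n].
    near=> y => j; rewrite ltnS leq_eqVlt => /orP [/eqP -> | jn].
      by near: y.
    by move: j jn; near: y.
  have nb := near2 Nk.
  rewrite /interior; near=> y.
  have gy : g x / 2 < g y by near: y.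
  have hy : forall j, (j < Nk)%N -> ~ Z j y by near: y.
  split.
    by apply: contrapT => nU; have := (gz y).2 nU; lra.
  move=> j; have [jN|Nj] := ltnP j Nk; first exact: hy.
  by move=> [_ /= h]; have := dk j Nj; lra.
exists [set x | U x /\ forall j, ~ Z j x]; split; first exact: oO.
- move=> x Ax; split; first exact: AU.
  move=> j [G _]; have : (msupp (mu_ j) `&` msupp mu) x by split => //; exact: Asupp.
  by rewrite disj.
exists (J 0%N) => j hj.
have hMj : (J (M j) <= j)%N by exact: Mseq_J.
have h := hJ (M j) j hMj.
pose Gd := [set x | del j <= g x].
have mS : measurable (~` msupp (mu_ j) : set (borelType K)).
  by apply: open_mB; apply: closed_openC; exact: msupp_closed.
have mGd : measurable (Gd : set (borelType K)).
  apply: closed_mB; exact: ((continuous_closedP g).1 cg _ (@closed_ge _ (del j))).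
have mO : measurable ([set x | U x /\ forall j, ~ Z j x] : set (borelType K)).
  exact: open_mB oO.
have sub : [set x | U x /\ forall j, ~ Z j x] `<=` ~` msupp (mu_ j) `|` Gd.
  move=> x [Ux nZ]; have [G|nG] := pselect (msupp (mu_ j) x); last by left.
  right; rewrite /Gd /=; apply/ltW; rewrite ltNge; apply/negP => hx.
  by apply: (nZ j); split.
have n0 : mu_ j (~` msupp (mu_ j)) = 0%E by exact: msupp_null (reg j).
have s1 : (mu_ j [set x | U x /\ forall j, ~ Z j x] <=
    mu_ j (~` msupp (mu_ j)) + mu_ j Gd)%E.
  apply: (le_trans _ (measureU2 _ mS mGd)).
  by apply: le_measure; rewrite ?inE //; exact: measurableU.
rewrite n0 add0e in s1.
have s2 : (mu_ j Gd <= \int[mu_ j]_x (phi (M j) x)%:E)%E.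
  apply: (@int_ge_meas _ _ (mu_ j) Gd (phi (M j)) mGd (cphi _) (phi0 _)).
  by move=> x; apply: phiG.
apply: le_lt_trans s1 _; apply: le_lt_trans s2 _; apply: lt_le_trans h _.
rewrite -(fineK fa) -EFinD lee_fin.
have : (mu U <= (fine a + eps / 3)%:E)%E by rewrite -(fineK fa) in hU.
rewrite -(fineK fU) lee_fin; lra.
Unshelve. all: by end_near.
Qed.
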